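(* Let $I\subseteq\mathbb{R}$ be an interval, $f:I\to\mathbb{R}$ differentiable on the interior $I^\circ$, and $a,b\in I^\circ$ with $a<b$, $f'\in L[a,b]$. Let $g:[a,b]\to\mathbb{R}$ be continuous, $\alpha>0$, $q>1$ and $p=\frac{q}{q-1}$ (so $1/p+1/q=1$). If $|f'|^q$ is convex on $[a,b]$, then, with $m=\frac{a+b}{2}$, $$\left|f(m)\left[J^{\alpha}_{m-}g(a)+J^{\alpha}_{m+}g(b)\right]-\left[J^{\alpha}_{m-}(fg)(a)+J^{\alpha}_{m+}(fg)(b)\right]\right|$$ $$\le \frac{\|g\|_{[a,b],\infty}(b-a)^{\alpha+1}}{2^{\alpha+1+\frac2q}(\alpha p+1)^{1/p}\Gamma(\alpha+1)}\left[\big(3|f'(a)|^q+|f'(b)|^q\big)^{1/q}+\big(|f'(a)|^q+3|f'(b)|^q\big)^{1/q}\right].$$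
   Context: For $\alpha>0$ and an integrable function $h$, the Riemann–Liouville fractional integrals are $J^{\alpha}_{c+}h(x)=\frac{1}{\Gamma(\alpha)}\int_c^x (x-t)^{\alpha-1}h(t)\,dt$ for $x>c$, and $J^{\alpha}_{c-}h(x)=\frac{1}{\Gamma(\alpha)}\int_x^c (t-x)^{\alpha-1}h(t)\,dt$ for $x<c$, where $\Gamma$ is the Gamma function. Thus, with $m=\frac{a+b}{2}$, $J^{\alpha}_{m-}h(a)=\frac{1}{\Gamma(\alpha)}\int_a^{m}(t-a)^{\alpha-1}h(t)\,dt$ and $J^{\alpha}_{m+}h(b)=\frac{1}{\Gamma(\alpha)}\int_{m}^{b}(b-t)^{\alpha-1}h(t)\,dt$. Here $fg$ denotes the pointwise product. For a continuous $g$ and an interval $[c,d]$, $\|g\|_{[c,d],\infty}=\sup_{x\in[c,d]}|g(x)|$. *)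

(* Defs.v *)
From Stdlib Require Import Reals Lra Classical ClassicalEpsilon ClassicalDescription.
Open Scope R_scope.

(* Riemann integral of F from c to d: the value RiemannInt pr for any
   integrability proof pr (independent of pr by RiemannInt_P5); an
   unspecified value if F is not Riemann integrable there. *)
Definition Rint (F : R -> R) (c d : R) : R :=
  epsilon (inhabits 0) (fun v =>
    exists pr : Riemann_integrable F c d, RiemannInt pr = v).

Definition improper_left (F : R -> R) (c d : R) : R :=
  epsilon (inhabits 0) (fun l => forall eps, eps > 0 ->
    exists delta, delta > 0 /\
      forall x, c < x < c + delta -> Rabs (Rint F x d - l) < eps).

Definition improper_right (F : R -> R) (c d : R) : R :=
  epsilon (inhabits 0) (fun l => forall eps, eps > 0 ->
    exists delta, delta > 0 /\
      forall x, d - delta < x < d -> Rabs (Rint F c x - l) < eps).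

Definition Gamma (s : R) : R :=
  epsilon (inhabits 0) (fun l =>
    Un_cv (fun n => Rint (fun t => Rpower t (s - 1) * exp (- t))
                          (/ INR (S n)) (INR (S n))) l).

(* Power x^y for x >= 0, with the convention 0^y = 0 (y > 0). *)
Definition rpow (x y : R) : R :=
  if Rle_dec x 0 then 0 else Rpower x y.

(* Riemann-Liouville fractional integrals
   J^al_{c+} h (x) = 1/Gamma(al) int_c^x (x-t)^(al-1) h(t) dt   (x > c)
   J^al_{c-} h (x) = 1/Gamma(al) int_x^c (t-x)^(al-1) h(t) dt   (x < c) *)
Definition RL_plus (al : R) (h : R -> R) (c x : R) : R :=
  / Gamma al * improper_right (fun t => Rpower (x - t) (al - 1) * h t) c x.

Definition RL_minus (al : R) (h : R -> R) (c x : R) : R :=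
  / Gamma al * improper_left (fun t => Rpower (t - x) (al - 1) * h t) x c.

Definition supnorm (g : R -> R) (c d : R) : R :=
  epsilon (inhabits 0) (fun s =>
    is_lub (fun y => exists x, c <= x <= d /\ y = Rabs (g x)) s).

Definition is_interval (I : R -> Prop) : Prop :=
  forall x y z, I x -> I z -> x <= y <= z -> I y.

Definition convex_on (h : R -> R) (c d : R) : Prop :=
  forall x y l, c <= x <= d -> c <= y <= d -> 0 <= l <= 1 ->
    h (l * x + (1 - l) * y) <= l * h x + (1 - l) * h y.

(* Main.v *)
Require Import Defs.
From Stdlib Require Import Reals Lra ZArith Classical ClassicalEpsilon FunctionalExtensionality.
From Coquelicot Require Import Coquelicot.
Open Scope R_scope.

Lemma exp_convex (l x y : R) : 0 <= l <= 1 ->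
  exp (l * x + (1 - l) * y) <= l * exp x + (1 - l) * exp y.
Proof.
  intros Hl. set (z := l * x + (1 - l) * y).
  assert (Ex : exp x = exp z * exp (x - z)) by (rewrite <- exp_plus; f_equal; ring).
  assert (Ey : exp y = exp z * exp (y - z)) by (rewrite <- exp_plus; f_equal; ring).
  pose proof (exp_ineq1_le (x - z)). pose proof (exp_ineq1_le (y - z)).
  pose proof (exp_pos z).
  rewrite Ex, Ey.
  assert (l * (exp z * exp (x - z)) >= l * (exp z * (1 + (x - z)))) by
    (apply Rle_ge, Rmult_le_compat_l; [lra| apply Rmult_le_compat_l; lra]).
  assert ((1-l) * (exp z * exp (y - z)) >= (1-l) * (exp z * (1 + (y - z)))) by
    (apply Rle_ge, Rmult_le_compat_l; [lra| apply Rmult_le_compat_l; lra]).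
  assert (l * (exp z * (1 + (x - z))) + (1-l) * (exp z * (1 + (y - z))) = exp z)
    by (unfold z; ring).
  lra.
Qed.

Lemma young (X Y p q : R) : 0 < X -> 0 < Y -> 1 < p -> 1 < q -> / p + / q = 1 ->
  X * Y <= Rpower X p / p + Rpower Y q / q.
Proof.
  intros HX HY Hp Hq Hpq.
  assert (X * Y = exp (/ p * (p * ln X) + (1 - / p) * (q * ln Y))).
  { replace (1 - /p) with (/q) by lra.
    replace (/ p * (p * ln X) + / q * (q * ln Y)) with (ln X + ln Y) by (field; lra).
    rewrite exp_plus, !exp_ln; auto. }
  rewrite H. unfold Rpower.
  eapply Rle_trans. apply exp_convex.
  split. apply Rlt_le, Rinv_0_lt_compat; lra.
  rewrite <- (Rinv_1). apply Rlt_le, Rinv_lt_contravar; lra.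
  replace (1 - /p) with (/q) by lra. unfold Rdiv. lra.
Qed.

Lemma rpower_small (y eps : R) : 0 < y -> 0 < eps ->
  exists d, 0 < d /\ forall x, 0 < x < d -> Rpower x y < eps.
Proof.
  intros Hy He. exists (Rpower eps (/ y)). split. apply exp_pos.
  intros x Hx. replace eps with (Rpower (Rpower eps (/ y)) y) at 1.
  apply Rlt_Rpower_l; auto.
  rewrite Rpower_mult. replace (/ y * y) with 1 by (field; lra). apply Rpower_1; auto.
Qed.

Lemma Rint_RInt (F : R -> R) c d : ex_RInt F c d -> Rint F c d = RInt F c d.
Proof.
  intros H. unfold Rint.
  pose proof (ex_RInt_Reals_0 _ _ _ H) as pr.
  destruct (epsilon_spec (inhabits 0) (fun v => exists pr : Riemann_integrable F c d, RiemannInt pr = v))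
    as [pr' Hpr'].
  exists (RiemannInt pr). exists pr. reflexivity.
  rewrite <- Hpr'. symmetry. apply RInt_Reals.
Qed.

Lemma Rpower_cont (x y : R) : 0 < x -> continuous (fun t => Rpower t y) x.
Proof.
  intros Hx. apply continuity_pt_filterlim.
  apply derivable_continuous_pt. exists (y * Rpower x (y - 1)).
  apply derivable_pt_lim_power; auto.
Qed.

Lemma cauchy_right (F : R -> R) (a : R) :
  (forall eps, 0 < eps -> exists d, 0 < d /\
     forall x y, a < x < a + d -> a < y < a + d -> Rabs (F x - F y) < eps) ->
  exists l, forall eps, eps > 0 -> exists d, d > 0 /\
     forall x, a < x < a + d -> Rabs (F x - l) < eps.
Proof.
  intros HC.
  set (u := fun n : nat => F (a + / (INR n + 1))).
  assert (Hsmall : forall d, 0 < d -> exists N, forall n, (n >= N)%nat -> a < a + / (INR n + 1) < a + d).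
  { intros d Hd. destruct (archimed (/ d)) as [H1 _].
    assert (0 <= IZR (up (/ d))) by (pose proof (Rinv_0_lt_compat d Hd); lra).
    exists (Z.to_nat (up (/ d))). intros n Hn.
    apply le_INR in Hn. rewrite INR_IZR_INZ in Hn. rewrite Z2Nat.id in Hn.
    2:{ apply le_IZR. lra. }
    pose proof (pos_INR n).
    split. pose proof (Rinv_0_lt_compat (INR n + 1)). lra.
    apply Rplus_lt_compat_l.
    rewrite <- (Rinv_inv d). apply Rinv_lt_contravar.
    apply Rmult_lt_0_compat; [apply Rinv_0_lt_compat|]; lra. lra. }
  assert (Hc : Cauchy_crit u).
  { intros eps He. destruct (HC eps He) as [d [Hd Hd']].
    destruct (Hsmall d Hd) as [N HN]. exists N. intros n m Hn Hm.
    unfold R_dist, u. apply Hd'; auto. }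
  destruct (Rcomplete.R_complete u Hc) as [l Hl]. exists l.
  intros eps He. destruct (HC (eps/2)) as [d [Hd Hd']]. lra.
  exists d. split; auto. intros x Hx.
  destruct (Hl (eps/2)) as [N1 HN1]. lra.
  destruct (Hsmall d Hd) as [N2 HN2].
  specialize (HN1 (max N1 N2) (Nat.le_max_l _ _)).
  specialize (HN2 (max N1 N2) (Nat.le_max_r _ _)).
  unfold R_dist, u in HN1.
  specialize (Hd' x _ Hx HN2).
  replace (F x - l) with ((F x - F (a + / (INR (max N1 N2) + 1))) + (F (a + / (INR (max N1 N2) + 1)) - l)) by ring.
  eapply Rle_lt_trans. apply Rabs_triang. lra.
Qed.

Lemma le_eps (u v : R) : (forall e, 0 < e -> u <= v + e) -> u <= v.
Proof.
  intros H. destruct (Rle_or_lt u v); auto.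
  specialize (H ((u - v)/2)). lra.
Qed.

Lemma RInt_lin2 (F G : R -> R) A B c d : ex_RInt F c d -> ex_RInt G c d ->
  RInt (fun t => A * F t + B * G t) c d = A * RInt F c d + B * RInt G c d.
Proof.
  intros HF HG. apply is_RInt_unique.
  exact (is_RInt_plus _ _ _ _ _ _ (is_RInt_scal _ _ _ A _ (RInt_correct _ _ _ HF))
                                  (is_RInt_scal _ _ _ B _ (RInt_correct _ _ _ HG))).
Qed.

Lemma RInt_scal1 (F : R -> R) A c d : ex_RInt F c d ->
  RInt (fun t => A * F t) c d = A * RInt F c d.
Proof.
  intros HF. apply is_RInt_unique.
  exact (is_RInt_scal _ _ _ A _ (RInt_correct _ _ _ HF)).
Qed.

Lemma ex_RInt_cont (F : R -> R) c d : c <= d -> (forall t, c <= t <= d -> continuous F t) ->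
  ex_RInt F c d.
Proof.
  intros Hcd H. apply (ex_RInt_continuous (V := R_CompleteNormedModule)). intros z Hz.
  rewrite Rmin_left in Hz by lra. rewrite Rmax_right in Hz by lra. auto.
Qed.

Lemma cont_rpow (u : R -> R) (p t : R) : continuous u t -> 0 < u t ->
  continuous (fun s => Rpower (u s) p) t.
Proof.
  intros Hc Hp. apply (continuous_comp u (fun x => Rpower x p)); auto.
  apply Rpower_cont; auto.
Qed.

Lemma rp_div (x P p : R) : 0 < x -> 0 < P -> p <> 0 ->
  Rpower (x / Rpower P (/ p)) p = Rpower x p / P.
Proof.
  intros Hx HP Hp. unfold Rpower at 1. rewrite ln_div; auto. 2: apply exp_pos.
  rewrite ln_Rpower.
  replace (p * (ln x - / p * ln P)) with (p * ln x + - ln P) by (field; auto).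
  rewrite exp_plus, exp_Ropp, exp_ln; auto.
Qed.

Lemma holder (u v : R -> R) c d p q : c < d -> 1 < p -> 1 < q -> / p + / q = 1 ->
  (forall t, c <= t <= d -> continuous u t /\ continuous v t /\ 0 < u t /\ 0 < v t) ->
  RInt (fun t => u t * v t) c d <=
  Rpower (RInt (fun t => Rpower (u t) p) c d) (/ p) *
  Rpower (RInt (fun t => Rpower (v t) q) c d) (/ q).
Proof.
  intros Hcd Hp Hq Hpq H.
  assert (Cup : forall t, c <= t <= d -> continuous (fun s => Rpower (u s) p) t).
  { intros t Ht. destruct (H t Ht) as [? [? [? ?]]]. apply cont_rpow; auto. }
  assert (Cvq : forall t, c <= t <= d -> continuous (fun s => Rpower (v s) q) t).
  { intros t Ht. destruct (H t Ht) as [? [? [? ?]]]. apply cont_rpow; auto. }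
  set (P := RInt (fun t => Rpower (u t) p) c d).
  set (Q := RInt (fun t => Rpower (v t) q) c d).
  assert (HP : 0 < P).
  { apply RInt_gt_0; [lra | intros; apply exp_pos | intros; apply Cup; lra]. }
  assert (HQ : 0 < Q).
  { apply RInt_gt_0; [lra | intros; apply exp_pos | intros; apply Cvq; lra]. }
  set (P' := Rpower P (/ p)). set (Q' := Rpower Q (/ q)).
  assert (HP' : 0 < P') by apply exp_pos.
  assert (HQ' : 0 < Q') by apply exp_pos.
  set (A := P' * Q' / (p * P)). set (B := P' * Q' / (q * Q)).
  assert (Hle : RInt (fun t => u t * v t) c d <=
                RInt (fun t => A * Rpower (u t) p + B * Rpower (v t) q) c d).
  { apply RInt_le. lra.
    apply ex_RInt_cont. lra. intros t Ht. destruct (H t Ht) as [? [? [? ?]]].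
    apply (continuous_mult u v); auto.
    apply ex_RInt_cont. lra. intros t Ht.
    apply (continuous_plus (fun s => A * Rpower (u s) p) (fun s => B * Rpower (v s) q)).
    apply (continuous_scal_r A (fun s => Rpower (u s) p)); auto.
    apply (continuous_scal_r B (fun s => Rpower (v s) q)); auto.
    intros t Ht. destruct (H t ltac:(lra)) as [? [? [? ?]]].
    pose proof (young (u t / P') (v t / Q') p q ltac:(apply Rdiv_lt_0_compat; auto)
       ltac:(apply Rdiv_lt_0_compat; auto) Hp Hq Hpq) as Y.
    unfold P', Q' in Y. rewrite !rp_div in Y; try lra.
    fold P' Q' in Y.
    assert (E1 : u t * v t = P' * Q' * (u t / P' * (v t / Q'))) by (field; lra).
    rewrite E1.
    assert (E2 : A * Rpower (u t) p + B * Rpower (v t) q =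
                 P' * Q' * (Rpower (u t) p / P / p + Rpower (v t) q / Q / q))
      by (unfold A, B; field; lra).
    rewrite E2. apply Rmult_le_compat_l. nra. auto. }
  rewrite RInt_lin2 in Hle.
  2: apply ex_RInt_cont; [lra| auto].
  2: apply ex_RInt_cont; [lra| auto].
  fold P Q in Hle.
  assert (A * P + B * Q = P' * Q' * (/ p + / q)) by (unfold A, B; field; lra).
  rewrite Hpq in H0.
  lra.
Qed.

Lemma dPow (a c t : R) : a < t -> c <> 0 ->
  is_derive (fun s => Rpower (s - a) c / c) t (Rpower (t - a) (c - 1)).
Proof.
  intros Ht Hc. apply is_derive_Reals.
  replace (Rpower (t - a) (c - 1)) with ((c * Rpower (t - a) (c - 1) * 1) * / c) by (field; auto).
  apply (derivable_pt_lim_scal_right (fun s => Rpower (s - a) c)).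
  apply (derivable_pt_lim_comp (fun s => s - a) (fun s => Rpower s c)).
  replace 1 with (1 - 0) by ring.
  apply derivable_pt_lim_minus. apply derivable_pt_lim_id. apply derivable_pt_lim_const.
  apply derivable_pt_lim_power. lra.
Qed.

Lemma cont_pow_shift (a c t : R) : a < t -> continuous (fun s => Rpower (s - a) c) t.
Proof.
  intros Ht. apply (continuous_comp (fun s => s - a) (fun s => Rpower s c)).
  apply (continuous_minus (fun s => s) (fun _ => a)). apply continuous_id. apply continuous_const.
  apply Rpower_cont. lra.
Qed.

Lemma int_pow (a c x y : R) : a < x <= y -> c <> 0 ->
  RInt (fun t => Rpower (t - a) (c - 1)) x y = (Rpower (y - a) c - Rpower (x - a) c) / c.
Proof.
  intros Hxy Hc. apply is_RInt_unique.
  replace ((Rpower (y - a) c - Rpower (x - a) c) / c) with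
    (minus (Rpower (y - a) c / c) (Rpower (x - a) c / c)) by (unfold minus, plus, opp; simpl; field; auto).
  apply (is_RInt_derive (fun s => Rpower (s - a) c / c)).
  intros z Hz. rewrite Rmin_left in Hz by lra. rewrite Rmax_right in Hz by lra.
  apply dPow; auto; lra.
  intros z Hz. rewrite Rmin_left in Hz by lra. rewrite Rmax_right in Hz by lra.
  apply cont_pow_shift; lra.
Qed.

Lemma cont_all_ex (l : R -> R) c d : (forall t, continuous l t) -> ex_RInt l c d.
Proof. intros H. apply (ex_RInt_continuous (V := R_CompleteNormedModule)). intros; auto. Qed.

Lemma mvt_bound (f f' l : R -> R) (t m : R) : t <= m ->
  (forall s, t <= s <= m -> derivable_pt_lim f s (f' s)) ->
  (forall s, continuous l s) ->
  (forall s, t <= s <= m -> Rabs (f' s) <= l s) ->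
  Rabs (f m - f t) <= RInt l t m.
Proof.
  intros Htm Hf Hl Hb.
  set (L := fun s => RInt l t s).
  assert (DL : forall s, is_derive L s (l s)).
  { intros s. apply (is_derive_RInt l L t s).
    apply filter_forall. intros b0. apply (RInt_correct l t b0). apply cont_all_ex; auto. apply Hl. }
  assert (CL : forall s, continuity_pt L s).
  { intros s. apply continuity_pt_filterlim. apply (ex_derive_continuous L). exists (l s). apply DL. }
  assert (Cf : forall s, t <= s <= m -> continuity_pt f s).
  { intros s Hs. apply derivable_continuous_pt. exists (f' s). apply Hf; auto. }
  assert (Lt : L t = 0). { unfold L. rewrite RInt_point. reflexivity. }
  assert (Lm : L m = RInt l t m) by reflexivity.
  destruct (MVT_gen (fun s => f s - L s) t m (fun s => f' s - l s)) as [c1 [Hc1 E1]].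
  { intros s Hs. rewrite Rmin_left in Hs by lra. rewrite Rmax_right in Hs by lra.
    apply is_derive_Reals. apply derivable_pt_lim_minus. apply Hf; lra. apply is_derive_Reals, DL. }
  { intros s Hs. rewrite Rmin_left in Hs by lra. rewrite Rmax_right in Hs by lra.
    apply continuity_pt_minus. apply Cf; lra. apply CL. }
  destruct (MVT_gen (fun s => f s + L s) t m (fun s => f' s + l s)) as [c2 [Hc2 E2]].
  { intros s Hs. rewrite Rmin_left in Hs by lra. rewrite Rmax_right in Hs by lra.
    apply is_derive_Reals. apply derivable_pt_lim_plus. apply Hf; lra. apply is_derive_Reals, DL. }
  { intros s Hs. rewrite Rmin_left in Hs by lra. rewrite Rmax_right in Hs by lra.
    apply continuity_pt_plus. apply Cf; lra. apply CL. }
  rewrite Rmin_left in Hc1, Hc2 by lra. rewrite Rmax_right in Hc1, Hc2 by lra.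
  pose proof (Hb c1 Hc1). pose proof (Hb c2 Hc2).
  pose proof (Rle_abs (f' c1)). pose proof (Rabs_pos (f' c2)).
  assert (- Rabs (f' c2) <= f' c2) by (pose proof (Rle_abs (- f' c2)); rewrite Rabs_Ropp in *; lra).
  assert ((f' c1 - l c1) * (m - t) <= 0) by (apply Rmult_le_0_r; lra).
  assert ((f' c2 + l c2) * (m - t) >= 0) by (apply Rle_ge, Rmult_le_pos; lra).
  apply Rabs_le. lra.
Qed.

Lemma rp_W (y al p : R) : 0 < y -> 0 < al ->
  Rpower (Rpower y al / al) p = / Rpower al p * Rpower y (al * p + 1 - 1).
Proof.
  intros Hy Hal. unfold Rpower. rewrite ln_div; auto. 2: apply exp_pos.
  rewrite ln_exp. rewrite <- exp_Ropp, <- exp_plus. f_equal. ring.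
Qed.

Lemma pq_facts (q : R) : 1 < q -> let p := q / (q - 1) in 1 < p /\ / p + / q = 1.
Proof.
  intros Hq p. unfold p. split.
  apply (Rmult_lt_reg_r (q - 1)). lra. unfold Rdiv. rewrite Rmult_assoc, Rinv_l; lra.
  field. lra.
Qed.

Lemma core (f f' g l : R -> R) (a m al q G x : R) :
  a < x < m -> 0 < al -> 1 < q ->
  (forall t, a <= t <= m -> derivable_pt_lim f t (f' t)) ->
  (forall t, continuous l t) -> (forall t, 0 < l t) ->
  (forall t, a <= t <= m -> Rabs (f' t) <= l t) ->
  (forall t, a < t <= m -> continuous g t /\ Rabs (g t) <= G) ->
  let p := q / (q - 1) in
  Rabs (RInt (fun t => Rpower (t - a) (al - 1) * g t * (f m - f t)) x m)
  <= G * Rpower (Rpower (m - a) (al * p + 1) / ((al * p + 1) * Rpower al p)) (/ p)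
       * Rpower (RInt (fun t => Rpower (l t) q) a m) (/ q).
Proof.
  intros Hx Hal Hq Hf Hlc Hlp Hfl Hg p.
  destruct (pq_facts q Hq) as [Hp Hpq]. fold p in Hp, Hpq.
  assert (HG : 0 <= G) by (destruct (Hg m ltac:(lra)) as [_ H]; pose proof (Rabs_pos (g m)); lra).
  set (w := fun t => Rpower (t - a) (al - 1)).
  set (W := fun t => Rpower (t - a) al / al).
  set (La := (fun t => RInt l t m) : R -> R).
  assert (Cf : forall s, a <= s <= m -> continuous f s).
  { intros s Hs. apply (ex_derive_continuous f). exists (f' s). apply is_derive_Reals, Hf; auto. }
  assert (Cw : forall s, a < s -> continuous w s) by (intros; apply cont_pow_shift; auto).
  assert (DW : forall s, a < s -> is_derive W s (w s)) by (intros; apply dPow; lra).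
  assert (CW : forall s, a < s -> continuous W s).
  { intros s Hs. apply (ex_derive_continuous W). exists (w s). auto. }
  assert (DLa : forall s, is_derive La s (opp (l s))).
  { intros s. apply (is_derive_RInt' l La s m).
    apply filter_forall. intros b0. apply (RInt_correct l b0 m). apply cont_all_ex; auto. apply Hlc. }
  assert (CLa : forall s, continuous La s).
  { intros s. apply (ex_derive_continuous La). eexists. apply DLa. }
  assert (Lam : La m = 0) by (unfold La; rewrite RInt_point; reflexivity).
  assert (S1 : forall t, x <= t <= m -> Rabs (f m - f t) <= La t).
  { intros t Ht. apply (mvt_bound f f' l); try lra; auto.
    intros s Hs; apply Hf; lra. intros s Hs; apply Hfl; lra. }
  assert (Hwpos : forall t, a < t -> 0 < w t) by (intros; apply exp_pos).
  assert (S2 : Rabs (RInt (fun t => w t * g t * (f m - f t)) x m) <= G * RInt (fun t => w t * La t) x m).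
  { eapply Rle_trans. apply abs_RInt_le. lra.
    apply ex_RInt_cont. lra. intros t Ht.
    apply (continuous_mult (fun s => w s * g s) (fun s => f m - f s)).
    apply (continuous_mult w g). apply Cw; lra. apply Hg; lra.
    apply (continuous_minus (fun _ => f m) f). apply continuous_const. apply Cf; lra.
    rewrite <- RInt_scal1.
    2:{ apply ex_RInt_cont. lra. intros t Ht. apply (continuous_mult w La). apply Cw; lra. auto. }
    apply RInt_le. lra.
    apply ex_RInt_cont. lra. intros t Ht.
    apply (continuous_comp (fun s => w s * g s * (f m - f s)) Rabs).
    apply (continuous_mult (fun s => w s * g s) (fun s => f m - f s)).
    apply (continuous_mult w g). apply Cw; lra. apply Hg; lra.
    apply (continuous_minus (fun _ => f m) f). apply continuous_const. apply Cf; lra.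
    apply continuous_Rabs.
    apply ex_RInt_cont. lra. intros t Ht.
    apply (continuous_scal_r G (fun s => w s * La s)). apply (continuous_mult w La). apply Cw; lra. auto.
    intros t Ht. rewrite !Rabs_mult. rewrite (Rabs_right (w t)) by (apply Rle_ge, Rlt_le, Hwpos; lra).
    destruct (Hg t ltac:(lra)) as [_ Hgt]. pose proof (S1 t ltac:(lra)).
    pose proof (Rabs_pos (g t)). pose proof (Rabs_pos (f m - f t)). pose proof (Hwpos t ltac:(lra)).
    replace (G * (w t * La t)) with (w t * (G * La t)) by ring.
    rewrite Rmult_assoc. apply Rmult_le_compat_l. lra.
    apply Rmult_le_compat; lra. }
  assert (Cl : forall s, continuous (fun t => opp (l t)) s).
  { intros s. apply (continuous_opp l). auto. }
  assert (S3a0 : is_RInt (fun t : R => plus (scal (w t) (La t)) (scal (W t) (opp (l t)))) x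
    m (minus (scal (W m) (La m)) (scal (W x) (La x)))).
  { apply (is_RInt_scal_derive W La w (fun t => opp (l t)) x m).
        intros t Ht. rewrite Rmin_left in Ht by lra. apply DW; lra.
        intros t Ht. apply DLa.
        intros t Ht. rewrite Rmin_left in Ht by lra. apply Cw; lra.
        intros t Ht. apply Cl. }
  assert (Ev : minus (scal (W m) (La m)) (scal (W x) (La x)) = - (W x * La x)).
  { rewrite Lam. unfold minus, plus, opp, scal; simpl; unfold mult; simpl. ring. }
  rewrite Ev in S3a0.
  assert (S3a : is_RInt (fun t => w t * La t - W t * l t) x m (- (W x * La x))).
  { eapply is_RInt_ext. 2: apply S3a0.
    intros t Ht. unfold plus, scal, opp; simpl. unfold mult; simpl. ring. }
  assert (S3 : RInt (fun t => w t * La t) x m <= RInt (fun t => W t * l t) x m).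
  { assert (E : RInt (fun t => w t * La t) x m =
            RInt (fun t => 1 * (w t * La t - W t * l t) + 1 * (W t * l t)) x m).
    { apply RInt_ext. intros t _. assert (Hr : forall u v : R, u = 1 * (u - v) + 1 * v) by (intros; ring). apply Hr. }
    rewrite E, RInt_lin2. rewrite (is_RInt_unique _ _ _ _ S3a).
    assert (0 <= W x * La x).
    { apply Rmult_le_pos. unfold W. apply Rlt_le, Rdiv_lt_0_compat. apply exp_pos. auto.
      pose proof (S1 x ltac:(lra)). pose proof (Rabs_pos (f m - f x)). lra. }
    lra.
    exists (- (W x * La x)). auto.
    apply ex_RInt_cont. lra. intros t Ht. apply (continuous_mult W l). apply CW; lra. auto. }
  assert (S4 : RInt (fun t => W t * l t) x m <=
     Rpower (RInt (fun t => Rpower (W t) p) x m) (/ p) *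
     Rpower (RInt (fun t => Rpower (l t) q) x m) (/ q)).
  { apply holder; auto. lra. intros t Ht. split. apply CW; lra. split. auto. split.
    unfold W. apply Rdiv_lt_0_compat. apply exp_pos. auto. auto. }
  assert (S5 : RInt (fun t => Rpower (W t) p) x m <= Rpower (m - a) (al * p + 1) / ((al * p + 1) * Rpower al p)).
  { assert (Hp0 : 0 < al * p + 1) by nra.
    rewrite (RInt_ext _ (fun t => / Rpower al p * Rpower (t - a) (al * p + 1 - 1))).
    2:{ intros t Ht. rewrite Rmin_left in Ht by lra. unfold W. apply rp_W; lra. }
    rewrite RInt_scal1. rewrite int_pow; try lra.
    set (E1 := Rpower al p). set (E2 := Rpower (m - a) (al * p + 1)).
    set (E3 := Rpower (x - a) (al * p + 1)).
    assert (H : 0 < E1) by apply exp_pos.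
    assert (H0 : 0 < E3) by apply exp_pos.
    clearbody E1 E2 E3.
    assert (/ E1 * ((E2 - E3) / (al * p + 1)) = E2 / ((al * p + 1) * E1) - E3 / ((al * p + 1) * E1)) by (field; lra).
    rewrite H1. assert (0 < E3 / ((al * p + 1) * E1)) by (apply Rdiv_lt_0_compat; [lra | apply Rmult_lt_0_compat; lra]).
    assert (Hr : forall u v : R, 0 < v -> u - v <= u) by (intros; lra). apply Hr. exact H2.
    apply ex_RInt_cont. lra. intros t Ht. apply cont_pow_shift. lra. }
  assert (PW : 0 < RInt (fun t => Rpower (W t) p) x m).
  { apply RInt_gt_0. lra. intros; apply exp_pos. intros t Ht. apply cont_rpow. apply CW; lra.
    unfold W. apply Rdiv_lt_0_compat. apply exp_pos. auto. }
  assert (Clq : forall t, continuous (fun s => Rpower (l s) q) t) by (intros; apply cont_rpow; auto).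
  assert (PL : 0 < RInt (fun t => Rpower (l t) q) x m).
  { apply RInt_gt_0. lra. intros; apply exp_pos. intros; auto. }
  assert (S6 : RInt (fun t => Rpower (l t) q) x m <= RInt (fun t => Rpower (l t) q) a m).
  { rewrite <- (RInt_Chasles (fun t => Rpower (l t) q) a x m).
    assert (0 <= RInt (fun t => Rpower (l t) q) a x).
    { apply RInt_ge_0. lra. apply cont_all_ex; auto. intros; apply Rlt_le, exp_pos. }
    unfold plus; simpl. lra.
    apply cont_all_ex; auto. apply cont_all_ex; auto. }
  assert (Hip : 0 <= / p) by (apply Rlt_le, Rinv_0_lt_compat; lra).
  assert (Hiq : 0 <= / q) by (apply Rlt_le, Rinv_0_lt_compat; lra).
  pose proof (Rle_Rpower_l _ _ (/ p) Hip (conj PW S5)) as R5.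
  pose proof (Rle_Rpower_l _ _ (/ q) Hiq (conj PL S6)) as R6.
  fold w. eapply Rle_trans. apply S2. rewrite Rmult_assoc. apply Rmult_le_compat_l. auto.
  eapply Rle_trans. apply S3. eapply Rle_trans. apply S4.
  apply Rmult_le_compat; auto; apply Rlt_le, exp_pos.
Qed.

Lemma plusR (x y : R) : plus x y = x + y.
Proof. reflexivity. Qed.

Lemma exp_mono (x y : R) : x <= y -> exp x <= exp y.
Proof. intros [H|H]. apply Rlt_le, exp_increasing; auto. subst; lra. Qed.

Lemma ln_le_2sqrt (t : R) : 1 <= t -> 0 <= ln t <= 2 * sqrt t.
Proof.
  intros Ht. split.
  rewrite <- ln_1. apply ln_le; lra.
  assert (Hs : 0 < sqrt t) by (apply sqrt_lt_R0; lra).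
  replace t with (sqrt t * sqrt t) at 1 by (apply sqrt_sqrt; lra).
  rewrite ln_mult; auto.
  pose proof (exp_ineq1_le (ln (sqrt t))). rewrite exp_ln in H; auto. lra.
Qed.

Lemma rln_bound (r t : R) : 1 <= t -> r * ln t <= 2 * r ^ 2 + t / 2.
Proof.
  intros Ht. destruct (ln_le_2sqrt t Ht) as [H0 H1].
  assert (Hs : 0 <= sqrt t) by apply sqrt_pos.
  assert (Hst : sqrt t * sqrt t = t) by (apply sqrt_sqrt; lra).
  assert (r * ln t <= Rabs r * (2 * sqrt t)).
  { eapply Rle_trans. apply Rmult_le_compat_r. auto. apply Rle_abs.
    apply Rmult_le_compat_l. apply Rabs_pos. auto. }
  assert (Rabs r ^ 2 = r ^ 2) by (rewrite RPow_abs; apply Rabs_right; nra).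
  pose proof (Rabs_pos r).
  pose proof (pow2_ge_0 (2 * Rabs r - sqrt t)). nra.
Qed.

Lemma small_inv (d : R) : 0 < d -> exists N, forall n, (n >= N)%nat -> 0 < / INR (S n) < d.
Proof.
  intros Hd. destruct (archimed (/ d)) as [H1 _].
  assert (0 <= IZR (up (/ d))) by (pose proof (Rinv_0_lt_compat d Hd); lra).
  exists (Z.to_nat (up (/ d))). intros n Hn.
  apply le_INR in Hn. rewrite INR_IZR_INZ in Hn. rewrite Z2Nat.id in Hn.
  2:{ apply le_IZR. lra. }
  rewrite S_INR. pose proof (pos_INR n).
  split. apply Rinv_0_lt_compat; lra.
  rewrite <- (Rinv_inv d). apply Rinv_lt_contravar.
  apply Rmult_lt_0_compat; [apply Rinv_0_lt_compat|]; lra. lra.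
Qed.

Definition gI (s : R) (n : nat) : R :=
  RInt (fun t => Rpower t (s - 1) * exp (- t)) (/ INR (S n)) (INR (S n)).

Lemma INR_S_ge1 n : 1 <= INR (S n).
Proof. rewrite S_INR. pose proof (pos_INR n). lra. Qed.

Lemma inv_le_S n : 0 < / INR (S n) <= 1.
Proof.
  pose proof (INR_S_ge1 n). split. apply Rinv_0_lt_compat; lra.
  rewrite <- Rinv_1. apply Rinv_le_contravar; lra.
Qed.

Lemma cont_gam (s t : R) : 0 < t -> continuous (fun t => Rpower t (s - 1) * exp (- t)) t.
Proof.
  intros Ht. apply (continuous_mult (fun t => Rpower t (s - 1)) (fun t => exp (- t))).
  apply Rpower_cont; auto.
  apply (continuous_comp (fun t => - t) exp). apply continuity_pt_filterlim. apply continuity_pt_opp, continuity_pt_id.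
  apply continuity_pt_filterlim. apply derivable_continuous_pt. apply derivable_pt_exp.
Qed.

Lemma ex_gam (s c d : R) : 0 < c <= d -> ex_RInt (fun t => Rpower t (s - 1) * exp (- t)) c d.
Proof. intros H. apply ex_RInt_cont. lra. intros t Ht. apply cont_gam. lra. Qed.

Lemma Rint_gI s n : Rint (fun t => Rpower t (s - 1) * exp (- t)) (/ INR (S n)) (INR (S n)) = gI s n.
Proof.
  apply Rint_RInt. apply ex_gam. pose proof (inv_le_S n). pose proof (INR_S_ge1 n). lra.
Qed.

Lemma gI_growing s : Un_growing (gI s).
Proof.
  intros n. unfold gI.
  pose proof (inv_le_S n) as H1. pose proof (inv_le_S (S n)) as H2.
  pose proof (INR_S_ge1 n). 
  assert (Hc : / INR (S (S n)) <= / INR (S n)).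
  { apply Rinv_le_contravar. lra. rewrite (S_INR (S n)). lra. }
  assert (HN : INR (S n) <= INR (S (S n))) by (rewrite (S_INR (S n)); lra).
  set (F := fun t => Rpower t (s - 1) * exp (- t)).
  rewrite <- (RInt_Chasles F (/ INR (S (S n))) (/ INR (S n)) (INR (S (S n)))).
  rewrite <- (RInt_Chasles F (/ INR (S n)) (INR (S n)) (INR (S (S n)))).
  assert (0 <= RInt F (/ INR (S (S n))) (/ INR (S n))).
  { apply RInt_ge_0. auto. apply ex_gam. lra. intros. unfold F. apply Rlt_le, Rmult_lt_0_compat; apply exp_pos. }
  assert (0 <= RInt F (INR (S n)) (INR (S (S n)))).
  { apply RInt_ge_0. auto. apply ex_gam. lra. intros. unfold F. apply Rlt_le, Rmult_lt_0_compat; apply exp_pos. }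
  repeat change (plus ?x ?y) with (Rplus x y). lra.
  apply ex_gam; lra. apply ex_gam; lra. apply ex_gam; lra. apply ex_gam; lra.
Qed.

Lemma gI_bounded s : 0 < s -> has_ub (gI s).
Proof.
  intros Hs. set (K := exp (2 * (s - 1) ^ 2)).
  exists (/ s + 2 * K). intros y [n ->]. unfold gI.
  pose proof (inv_le_S n) as H1. pose proof (INR_S_ge1 n) as H2.
  set (c := / INR (S n)). set (N := INR (S n)). fold c N in H1, H2.
  set (F := fun t => Rpower t (s - 1) * exp (- t)).
  rewrite <- (RInt_Chasles F c 1 N). 2,3: apply ex_gam; lra.
  rewrite plusR.
  assert (B1 : RInt F c 1 <= / s).
  { apply Rle_trans with (RInt (fun t => Rpower (t - 0) (s - 1)) c 1).
    apply RInt_le. lra. apply ex_gam; lra.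
    apply ex_RInt_cont. lra. intros. apply cont_pow_shift; lra.
    intros t Ht. unfold F. rewrite Rminus_0_r.
    pose proof (exp_pos (- t)). pose proof (exp_pos ((s - 1) * ln t)).
    assert (exp (- t) <= 1) by (rewrite <- exp_0; apply exp_mono; lra). unfold Rpower. nra.
    rewrite int_pow; try lra. rewrite !Rminus_0_r.
    unfold Rpower. rewrite ln_1, Rmult_0_r, exp_0. pose proof (exp_pos (s * ln c)).
    assert (0 < / s) by (apply Rinv_0_lt_compat; lra). unfold Rdiv. nra. }
  assert (B2 : RInt F 1 N <= 2 * K).
  { apply Rle_trans with (RInt (fun t => K * exp (- t / 2)) 1 N).
    apply RInt_le. lra. apply ex_gam; lra.
    apply ex_RInt_cont. lra. intros t Ht.
    apply (continuous_scal_r K (fun t => exp (- t / 2))).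
    apply (continuous_comp (fun t => - t / 2) exp).
    apply continuity_pt_filterlim. apply derivable_continuous_pt. auto_derive. auto.
    apply continuity_pt_filterlim. apply derivable_continuous_pt. apply derivable_pt_exp.
    intros t Ht. unfold F, K, Rpower. rewrite <- !exp_plus. apply exp_mono.
    pose proof (rln_bound (s - 1) t ltac:(lra)). lra.
    rewrite RInt_scal1.
    2:{ apply ex_RInt_cont. lra. intros t Ht.
    apply (continuous_comp (fun t => - t / 2) exp).
    apply continuity_pt_filterlim. apply derivable_continuous_pt. auto_derive. auto.
    apply continuity_pt_filterlim. apply derivable_continuous_pt. apply derivable_pt_exp. }
    assert (E : RInt (fun t => exp (- t / 2)) 1 N = 2 * exp (- 1 / 2) - 2 * exp (- N / 2)).
    { apply is_RInt_unique.
      replace (2 * exp (- 1 / 2) - 2 * exp (- N / 2)) with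
        (minus (- 2 * exp (- N / 2)) (- 2 * exp (- 1 / 2))) by (unfold minus, plus, opp; simpl; ring).
      apply (is_RInt_derive (fun t => - 2 * exp (- t / 2))).
      intros x Hx. auto_derive. auto. assert (Hr: forall u : R, -2 * (-(1) * /2 * u) = u) by (intros; field). unfold Rdiv. apply Hr.
      intros x Hx. apply (continuous_comp (fun t => - t / 2) exp).
      apply continuity_pt_filterlim. apply derivable_continuous_pt. auto_derive. auto.
      apply continuity_pt_filterlim. apply derivable_continuous_pt. apply derivable_pt_exp. }
    rewrite E. pose proof (exp_pos (- N / 2)).
    assert (exp (- 1 / 2) <= 1) by (rewrite <- exp_0; apply exp_mono; lra).
    assert (0 < K) by apply exp_pos. nra. }
  lra.
Qed.

Lemma gI_rel (s : R) (n : nat) : 0 < s ->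
  gI (s + 1) n = s * gI s n + Rpower (/ INR (S n)) s * exp (- / INR (S n))
                 - Rpower (INR (S n)) s * exp (- INR (S n)).
Proof.
  intros Hs. unfold gI.
  pose proof (inv_le_S n) as H1. pose proof (INR_S_ge1 n) as H2.
  set (c := / INR (S n)). set (N := INR (S n)). fold c N in H1, H2.
  set (H := fun t => - (Rpower t s * exp (- t))).
  set (dH := fun t => 1 * (Rpower t (s - 1 + 1) * exp (- t)) + (- s) * (Rpower t (s - 1) * exp (- t))).
  assert (D : forall t, 0 < t -> is_derive H t (dH t)).
  { intros t Ht. apply is_derive_Reals. unfold H, dH.
    replace (s - 1 + 1) with s by ring.
    replace (1 * (Rpower t s * exp (- t)) + - s * (Rpower t (s - 1) * exp (- t))) with
      (- (s * Rpower t (s - 1) * exp (- t) + Rpower t s * (exp (- t) * (- 1)))) by ring.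
    apply derivable_pt_lim_opp.
    apply (derivable_pt_lim_mult (fun t => Rpower t s) (fun t => exp (- t))).
    apply derivable_pt_lim_power; auto.
    apply (derivable_pt_lim_comp (fun t => - t) exp).
    apply derivable_pt_lim_opp. apply derivable_pt_lim_id. apply derivable_pt_lim_exp. }
  assert (I : is_RInt dH c N (minus (H N) (H c))).
  { apply (is_RInt_derive (V := R_CompleteNormedModule) H dH). intros t Ht. rewrite Rmin_left in Ht by lra. apply D; lra.
    intros t Ht. rewrite Rmin_left in Ht by lra. unfold dH.
    apply (continuous_plus (fun t => 1 * (Rpower t (s - 1 + 1) * exp (- t))) (fun t => - s * (Rpower t (s - 1) * exp (- t)))).
    apply (continuous_scal_r 1 (fun t => Rpower t (s - 1 + 1) * exp (- t))).
    replace (s - 1 + 1) with (s + 1 - 1) by ring. apply cont_gam; lra.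
    apply (continuous_scal_r (- s) (fun t => Rpower t (s - 1) * exp (- t))). apply cont_gam; lra. }
  apply (is_RInt_unique (V := R_CompleteNormedModule)) in I. unfold dH in I. rewrite RInt_lin2 in I.
  2: replace (s - 1 + 1) with (s + 1 - 1) by ring; apply ex_gam; lra.
  2: apply ex_gam; lra.
  replace (s - 1 + 1) with (s + 1 - 1) in I by ring.
  unfold minus, plus, opp in I; simpl in I. unfold H in I. lra.
Qed.

Lemma cv_const (c : R) : Un_cv (fun _ => c) c.
Proof. intros e He. exists 0%nat. intros. unfold R_dist. rewrite Rminus_diag, Rabs_R0. auto. Qed.

Lemma cv_bd1 (s : R) : 0 < s -> Un_cv (fun n => Rpower (/ INR (S n)) s * exp (- / INR (S n))) 0.
Proof.
  intros Hs e He. destruct (rpower_small s e Hs He) as [d [Hd Hd']].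
  destruct (small_inv d Hd) as [N HN]. exists N. intros n Hn.
  specialize (HN n Hn). unfold R_dist. rewrite Rminus_0_r.
  pose proof (exp_pos (- / INR (S n))). pose proof (exp_pos (s * ln (/ INR (S n)))).
  assert (exp (- / INR (S n)) <= 1) by (rewrite <- exp_0; apply exp_mono; lra).
  specialize (Hd' _ HN). unfold Rpower in *.
  rewrite Rabs_right by (apply Rle_ge, Rlt_le, Rmult_lt_0_compat; auto). nra.
Qed.

Lemma cv_bd2 (s : R) : 0 < s -> Un_cv (fun n => Rpower (INR (S n)) s * exp (- INR (S n))) 0.
Proof.
  intros Hs e He. set (K := exp (2 * s ^ 2)). assert (HK : 0 < K) by apply exp_pos.
  destruct (small_inv (e / (2 * K))) as [N HN]. apply Rdiv_lt_0_compat; lra.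
  exists N. intros n Hn. specialize (HN n Hn). unfold R_dist. rewrite Rminus_0_r.
  pose proof (INR_S_ge1 n). set (M := INR (S n)) in *.
  unfold Rpower. rewrite <- exp_plus. rewrite Rabs_right by (apply Rle_ge, Rlt_le, exp_pos).
  eapply Rle_lt_trans. apply exp_mono. pose proof (rln_bound s M H) as Hb0.
  assert (Hb1 : s * ln M + - M <= 2 * s ^ 2 + - (M / 2)) by lra. exact Hb1.
  rewrite exp_plus. fold K.
  pose proof (exp_ineq1_le (M / 2)).
  assert (Hx1 : exp (- (M / 2)) = / exp (M / 2)) by apply exp_Ropp. rewrite Hx1.
  assert (Hx2 : 0 < exp (M / 2)) by apply exp_pos.
  apply Rmult_lt_reg_r with (exp (M / 2)). auto.
  rewrite Rmult_assoc, Rinv_l by lra. rewrite Rmult_1_r.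
  destruct HN as [HN1 HN2].
  assert (K / M < e / 2).
  { apply Rmult_lt_reg_r with (/ K * M * 2). 
    apply Rmult_lt_0_compat. apply Rmult_lt_0_compat. apply Rinv_0_lt_compat; auto. lra. lra.
    replace (K / M * (/ K * M * 2)) with 2 by (field; lra).
    apply Rmult_lt_reg_r with (/ M). apply Rinv_0_lt_compat; lra.
    replace (2 * / M) with (2 * / M) by ring.
    replace (e / 2 * (/ K * M * 2) * / M) with (e / K) by (field; lra).
    replace (e / K) with (2 * (e / (2 * K))) by (field; lra). lra. }
  assert (K / M * M = K) by (field; lra). nra.
Qed.

Lemma gI_cv_ex (s : R) : 0 < s -> exists l, Un_cv (gI s) l.
Proof.
  intros Hs. destruct (growing_cv _ (gI_growing s) (gI_bounded s Hs)) as [l Hl]. eauto.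
Qed.

Lemma Gamma_spec (s : R) : 0 < s -> Un_cv (gI s) (Gamma s).
Proof.
  intros Hs. unfold Gamma.
  assert (E : (fun n => Rint (fun t => Rpower t (s - 1) * exp (- t)) (/ INR (S n)) (INR (S n))) = gI s).
  { apply functional_extensionality. intros n. apply Rint_gI. }
  rewrite E. apply epsilon_spec. apply gI_cv_ex; auto.
Qed.

Lemma gamma_facts (s : R) : 0 < s -> 0 < Gamma s /\ Gamma (s + 1) = s * Gamma s.
Proof.
  intros Hs. pose proof (Gamma_spec s Hs) as G1.
  split.
  - apply Rlt_le_trans with (gI s 1). 2: apply (growing_ineq _ _ (gI_growing s) G1).
    unfold gI. apply RInt_gt_0.
    pose proof (inv_le_S 1). rewrite S_INR. simpl. lra.
    intros. apply Rmult_lt_0_compat; apply exp_pos.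
    intros x Hx. apply cont_gam. pose proof (inv_le_S 1). lra.
  - pose proof (Gamma_spec (s + 1) ltac:(lra)) as G2.
    assert (G3 : Un_cv (gI (s + 1)) (s * Gamma s + 0 - 0)).
    { assert (E : gI (s + 1) = fun n => s * gI s n + Rpower (/ INR (S n)) s * exp (- / INR (S n))
                 - Rpower (INR (S n)) s * exp (- INR (S n))).
      { apply functional_extensionality. intros n. apply gI_rel; auto. }
      rewrite E. apply CV_minus. apply CV_plus. apply (CV_mult (fun _ => s)). apply cv_const. auto.
      apply cv_bd1; auto. apply cv_bd2; auto. }
    rewrite (UL_sequence _ _ _ G2 G3). ring.
Qed.

Lemma refl_RInt (F : R -> R) (a b m y : R) : m = (a + b) / 2 -> ex_RInt F m y ->
  RInt F m y = RInt (fun s => F (a + b - s)) (a + b - y) m.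
Proof.
  intros Hm Hex. symmetry. apply (is_RInt_unique (V := R_CompleteNormedModule)).
  assert (H0 : is_RInt F (-1 * m + (a + b)) (-1 * (a + b - y) + (a + b)) (RInt F m y)).
  { replace (-1 * m + (a + b)) with m by lra.
    replace (-1 * (a + b - y) + (a + b)) with y by lra. apply (RInt_correct (V := R_CompleteNormedModule)). auto. }
  pose proof (is_RInt_comp_lin F (-1) (a + b) m (a + b - y) _ H0) as H1.
  pose proof (is_RInt_swap _ _ _ _ H1) as H2.
  pose proof (is_RInt_opp _ _ _ _ H2) as H3.
  eapply is_RInt_ext. 2: { replace (RInt F m y) with (opp (opp (RInt F m y))). apply H3.
    apply opp_opp. }
  intros x _. unfold opp, scal; simpl. unfold mult; simpl.
  replace (-1 * x + (a + b)) with (a + b - x) by ring.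
  assert (Hr : forall u : R, - (-1 * u) = u) by (intros; ring). apply Hr.
Qed.

Lemma ex_wh (h : R -> R) a al x y : a < x <= y -> (forall t, x <= t <= y -> continuous h t) ->
  ex_RInt (fun t => Rpower (t - a) (al - 1) * h t) x y.
Proof.
  intros Hxy Hh. apply ex_RInt_cont. lra. intros t Ht.
  apply (continuous_mult (fun t => Rpower (t - a) (al - 1)) h). apply cont_pow_shift. lra. auto.
Qed.

Lemma pow_int_bound (h : R -> R) a x y M al : a < x <= y -> 0 < al ->
  (forall t, x <= t <= y -> continuous h t /\ Rabs (h t) <= M) ->
  Rabs (RInt (fun t => Rpower (t - a) (al - 1) * h t) x y) <= M * (Rpower (y - a) al / al).
Proof.
  intros Hxy Hal H.
  eapply Rle_trans. apply abs_RInt_le. lra. apply ex_wh. lra. intros; apply H; auto.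
  apply Rle_trans with (RInt (fun t => M * Rpower (t - a) (al - 1)) x y).
  apply RInt_le. lra.
  apply ex_RInt_cont. lra. intros t Ht.
  apply (continuous_comp (fun t => Rpower (t - a) (al - 1) * h t) Rabs).
  apply (continuous_mult (fun t => Rpower (t - a) (al - 1)) h). apply cont_pow_shift. lra. apply H; auto.
  apply continuous_Rabs.
  apply ex_RInt_cont. lra. intros t Ht. apply (continuous_scal_r M (fun t => Rpower (t - a) (al - 1))).
  apply cont_pow_shift; lra.
  intros t Ht. rewrite Rabs_mult. rewrite (Rabs_right (Rpower _ _)) by (apply Rle_ge, Rlt_le, exp_pos).
  rewrite Rmult_comm. apply Rmult_le_compat_r. apply Rlt_le, exp_pos. apply H; lra.
  rewrite RInt_scal1. rewrite int_pow; try lra.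
  destruct (H y ltac:(lra)) as [_ HM]. pose proof (Rabs_pos (h y)).
  apply Rmult_le_compat_l. lra. unfold Rdiv. apply Rmult_le_compat_r.
  apply Rlt_le, Rinv_0_lt_compat; lra. pose proof (exp_pos ((al) * ln (x - a))). unfold Rpower in *. lra.
  apply ex_RInt_cont. lra. intros. apply cont_pow_shift; lra.
Qed.

Lemma improper_left_spec (h : R -> R) a m al M : a < m -> 0 < al ->
  (forall t, a < t <= m -> continuous h t /\ Rabs (h t) <= M) ->
  forall eps, eps > 0 -> exists d, d > 0 /\ forall x, a < x < a + d ->
    Rabs (Rint (fun t => Rpower (t - a) (al - 1) * h t) x m
          - improper_left (fun t => Rpower (t - a) (al - 1) * h t) a m) < eps.
Proof.
  intros Ham Hal H.
  set (F := fun t => Rpower (t - a) (al - 1) * h t).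
  assert (HM : 0 <= M) by (destruct (H m ltac:(lra)) as [_ HH]; pose proof (Rabs_pos (h m)); lra).
  assert (Key : forall x y, a < x <= y -> y <= m -> Rint F x m - Rint F y m = RInt F x y).
  { intros x y Hx Hy. rewrite !Rint_RInt.
    rewrite <- (RInt_Chasles F x y m). unfold plus; simpl. ring.
    apply ex_wh; try lra; intros; apply H; lra.
    apply ex_wh; try lra; intros; apply H; lra.
    apply ex_wh; try lra; intros; apply H; lra.
    apply ex_wh; try lra; intros; apply H; lra. }
  unfold improper_left. fold F. apply epsilon_spec.
  apply cauchy_right. intros eps He.
  destruct (rpower_small al (eps * al / (2 * (M + 1)))) as [d0 [Hd0 Hd0']]. auto.
  apply Rdiv_lt_0_compat. nra. lra.
  exists (Rmin d0 (m - a)). split. apply Rmin_pos; lra.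
  assert (Hw : forall x y, a < x <= y -> y < a + Rmin d0 (m - a) -> Rabs (Rint F x m - Rint F y m) < eps).
  { intros x y Hx Hy. pose proof (Rmin_l d0 (m - a)). pose proof (Rmin_r d0 (m - a)).
    rewrite Key by lra. eapply Rle_lt_trans. apply pow_int_bound; try lra.
    intros; apply H; lra.
    specialize (Hd0' (y - a) ltac:(lra)).
    apply Rle_lt_trans with (M * (eps * al / (2 * (M + 1)) / al)).
    apply Rmult_le_compat_l. auto. unfold Rdiv. apply Rmult_le_compat_r.
    apply Rlt_le, Rinv_0_lt_compat; lra. lra.
    replace (M * (eps * al / (2 * (M + 1)) / al)) with (eps * (M / (2 * (M + 1)))) by (field; lra).
    assert (M / (2 * (M + 1)) < 1).
    { apply Rmult_lt_reg_r with (2 * (M + 1)). lra. unfold Rdiv. rewrite Rmult_assoc, Rinv_l by lra. lra. }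
    nra. }
  intros x y Hx Hy. destruct (Rle_or_lt x y).
  apply Hw; lra. rewrite Rabs_minus_sym. apply Hw; lra.
Qed.

Lemma refl_w (h : R -> R) a b al y : a < b -> (a + b) / 2 < y < b ->
  (forall t, (a + b) / 2 <= t <= y -> continuous h t) ->
  Rint (fun t => Rpower (b - t) (al - 1) * h t) ((a + b) / 2) y =
  RInt (fun s => Rpower (s - a) (al - 1) * h (a + b - s)) (a + b - y) ((a + b) / 2).
Proof.
  intros Hab Hy Hh.
  assert (Ex : ex_RInt (fun t => Rpower (b - t) (al - 1) * h t) ((a + b) / 2) y).
  { apply ex_RInt_cont. lra. intros t Ht.
    apply (continuous_mult (fun t => Rpower (b - t) (al - 1)) h).
    apply (continuous_comp (fun t => b - t) (fun t => Rpower t (al - 1))).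
    apply (continuous_minus (fun _ => b) (fun t => t)). apply continuous_const. apply continuous_id.
    apply Rpower_cont. lra. auto. }
  rewrite Rint_RInt by auto. rewrite (refl_RInt _ a b ((a + b) / 2) y) by auto.
  apply RInt_ext. intros s _. replace (b - (a + b - s)) with (s - a) by ring. reflexivity.
Qed.

Lemma improper_right_spec (h : R -> R) a b al M : a < b -> 0 < al ->
  (forall t, (a + b) / 2 <= t < b -> continuous h t /\ Rabs (h t) <= M) ->
  forall eps, eps > 0 -> exists d, d > 0 /\ forall y, b - d < y < b ->
    Rabs (Rint (fun t => Rpower (b - t) (al - 1) * h t) ((a + b) / 2) y
          - improper_right (fun t => Rpower (b - t) (al - 1) * h t) ((a + b) / 2) b) < eps.
Proof.
  intros Hab Hal H.
  set (h2 := fun s => h (a + b - s)).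
  assert (H2 : forall t, a < t <= (a + b) / 2 -> continuous h2 t /\ Rabs (h2 t) <= M).
  { intros t Ht. split. unfold h2. apply (continuous_comp (fun s => a + b - s) h).
    apply (continuous_minus (fun _ => a + b) (fun t => t)). apply continuous_const. apply continuous_id.
    apply H; lra. apply H; lra. }
  pose proof (improper_left_spec h2 a ((a + b) / 2) al M ltac:(lra) Hal H2) as HL.
  unfold improper_right. apply epsilon_spec.
  exists (improper_left (fun t => Rpower (t - a) (al - 1) * h2 t) a ((a + b) / 2)).
  intros eps He. destruct (HL eps He) as [d [Hd Hd']].
  exists (Rmin d ((b - a) / 2)). split. apply Rmin_pos; lra.
  intros y Hy. pose proof (Rmin_l d ((b - a) / 2)). pose proof (Rmin_r d ((b - a) / 2)).
  rewrite refl_w; try lra. 2: intros; apply H; lra.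
  rewrite <- Rint_RInt. apply Hd'. lra.
  apply ex_wh. lra. intros; apply H2; lra.
Qed.

Lemma interior_ab (I : R -> Prop) a b : is_interval I -> interior I a -> interior I b -> a < b ->
  forall t, a <= t <= b -> interior I t.
Proof.
  intros HI [da Ha] [db Hb] Hab t Ht.
  assert (Ia : I a) by (apply Ha; unfold disc; rewrite Rminus_diag, Rabs_R0; apply cond_pos).
  assert (Ib : I b) by (apply Hb; unfold disc; rewrite Rminus_diag, Rabs_R0; apply cond_pos).
  assert (Hd : 0 < Rmin da db) by (apply Rmin_pos; apply cond_pos).
  exists (mkposreal _ Hd). intros y Hy. unfold disc in Hy. simpl in Hy.
  pose proof (Rmin_l da db). pose proof (Rmin_r da db).
  destruct (Rlt_or_le y a). apply Ha. unfold disc. apply Rabs_def2 in Hy. apply Rabs_def1; lra.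
  destruct (Rlt_or_le b y). apply Hb. unfold disc. apply Rabs_def2 in Hy. apply Rabs_def1; lra.
  apply (HI a y b); auto.
Qed.

Lemma g_cont_int (g : R -> R) a b :
  (forall x, a <= x <= b -> limit1_in g (fun y => a <= y <= b) (g x) x) ->
  forall t, a < t < b -> continuous g t.
Proof.
  intros Hg t Ht. apply continuity_pt_filterlim.
  unfold continuity_pt, continue_in, limit1_in, limit_in. intros eps He.
  destruct (Hg t ltac:(lra) eps He) as [alp [Ha Hb]].
  exists (Rmin alp (Rmin (t - a) (b - t))). split.
  apply Rmin_pos. lra. apply Rmin_pos; lra.
  intros x [_ Hd]. apply Hb. simpl in *. unfold R_dist in *.
  pose proof (Rmin_l alp (Rmin (t - a) (b - t))). pose proof (Rmin_r alp (Rmin (t - a) (b - t))).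
  pose proof (Rmin_l (t - a) (b - t)). pose proof (Rmin_r (t - a) (b - t)).
  apply Rabs_def2 in Hd. split. split; lra. apply Rabs_def1; lra.
Qed.

Lemma clamp_lip a b x y : a <= b -> Rabs (Rmax a (Rmin b x) - Rmax a (Rmin b y)) <= Rabs (x - y).
Proof.
  intros Hab. unfold Rmax, Rmin.
  repeat (destruct Rle_dec); apply Rabs_le; pose proof (Rle_abs (x - y)); pose proof (Rle_abs (-(x - y)));
    rewrite Rabs_Ropp in *; lra.
Qed.

Lemma clamp_in a b x : a <= b -> a <= Rmax a (Rmin b x) <= b.
Proof. intros. unfold Rmax, Rmin. repeat destruct Rle_dec; lra. Qed.

Lemma clamp_id a b x : a <= x <= b -> Rmax a (Rmin b x) = x.
Proof. intros. unfold Rmax, Rmin. repeat destruct Rle_dec; lra. Qed.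

Lemma g_bounded (g : R -> R) a b : a < b ->
  (forall x, a <= x <= b -> limit1_in g (fun y => a <= y <= b) (g x) x) ->
  exists M, forall t, a <= t <= b -> Rabs (g t) <= M.
Proof.
  intros Hab Hg.
  set (G := fun t => Rabs (g (Rmax a (Rmin b t)))).
  assert (C : forall t, continuity_pt G t).
  { intros t. unfold continuity_pt, continue_in, limit1_in, limit_in. intros eps He.
    pose proof (clamp_in a b t ltac:(lra)) as Hc.
    destruct (Hg _ Hc eps He) as [alp [Ha Hb]].
    exists alp. split; auto. intros x [_ Hd]. simpl in *. unfold R_dist in *. unfold G.
    eapply Rle_lt_trans. apply Rabs_triang_inv2.
    destruct (Req_dec (Rmax a (Rmin b x)) (Rmax a (Rmin b t))) as [E|E].
    rewrite E, Rminus_diag, Rabs_R0. lra.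
    apply Hb. split. apply clamp_in; lra.
    eapply Rle_lt_trans. apply clamp_lip. lra. auto. }
  destruct (continuity_ab_maj G a b ltac:(lra) (fun c _ => C c)) as [Mx [HM _]].
  exists (G Mx). intros t Ht. specialize (HM t Ht). unfold G in HM. rewrite clamp_id in HM; auto.
Qed.

Lemma supnorm_bound (g : R -> R) a b : a < b ->
  (forall x, a <= x <= b -> limit1_in g (fun y => a <= y <= b) (g x) x) ->
  forall t, a <= t <= b -> Rabs (g t) <= supnorm g a b.
Proof.
  intros Hab Hg.
  destruct (g_bounded g a b Hab Hg) as [M HM].
  set (E := fun y => exists x, a <= x <= b /\ y = Rabs (g x)).
  assert (Hex : exists s, is_lub E s).
  { destruct (completeness E) as [s Hs]. exists M. intros y [x [Hx ->]]. auto.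
    exists (Rabs (g a)). exists a. split; [lra| auto]. eauto. }
  unfold supnorm. fold E.
  pose proof (epsilon_spec (inhabits 0) (fun s => is_lub E s) Hex) as [Hub _].
  intros t Ht. apply Hub. exists t. auto.
Qed.

Lemma f_bounded (f : R -> R) a b : a <= b -> (forall t, a <= t <= b -> continuity_pt f t) ->
  exists M, forall t, a <= t <= b -> Rabs (f t) <= M.
Proof.
  intros Hab Hf.
  destruct (continuity_ab_maj (comp Rabs f) a b Hab) as [Mx [HM _]].
  intros c Hc. apply continuity_pt_comp. auto. apply Rcontinuity_abs.
  exists (comp Rabs f Mx). intros t Ht. apply (HM t Ht).
Qed.

Lemma rpow_nonneg x y : 0 <= rpow x y.
Proof. unfold rpow. destruct Rle_dec. lra. apply Rlt_le, exp_pos. Qed.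

Lemma convex_bound (f' : R -> R) a b q : a < b ->
  convex_on (fun t => rpow (Rabs (f' t)) q) a b ->
  forall t, a <= t <= b -> rpow (Rabs (f' t)) q <=
    ((b - t) * rpow (Rabs (f' a)) q + (t - a) * rpow (Rabs (f' b)) q) / (b - a).
Proof.
  intros Hab Hc t Ht.
  specialize (Hc a b ((b - t) / (b - a)) ltac:(lra) ltac:(lra)).
  assert (0 <= (b - t) / (b - a) <= 1).
  { split. apply Rdiv_le_0_compat; lra.
    apply Rmult_le_reg_r with (b - a). lra. unfold Rdiv. rewrite Rmult_assoc, Rinv_l; lra. }
  specialize (Hc H). simpl in Hc.
  replace ((b - t) / (b - a) * a + (1 - (b - t) / (b - a)) * b) with t in Hc by (field; lra).
  replace (((b - t) * rpow (Rabs (f' a)) q + (t - a) * rpow (Rabs (f' b)) q) / (b - a)) with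
    ((b - t) / (b - a) * rpow (Rabs (f' a)) q + (1 - (b - t) / (b - a)) * rpow (Rabs (f' b)) q)
    by (field; lra). auto.
Qed.

Lemma fprime_le_ell (v Lt q e : R) : 1 < q -> 0 < e -> rpow (Rabs v) q <= Lt ->
  Rabs v <= Rpower ((Lt + Rabs Lt) / 2 + e) (/ q).
Proof.
  intros Hq He H. destruct (Req_dec v 0) as [->|Hv].
  rewrite Rabs_R0. apply Rlt_le, exp_pos.
  assert (Hp : 0 < Rabs v) by (apply Rabs_pos_lt; auto).
  unfold rpow in H. destruct Rle_dec. lra.
  replace (Rabs v) with (Rpower (Rpower (Rabs v) q) (/ q)) at 1.
  apply Rle_Rpower_l. apply Rlt_le, Rinv_0_lt_compat; lra.
  split. apply exp_pos. pose proof (Rle_abs Lt). lra.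
  rewrite Rpower_mult. replace (q * / q) with 1 by (field; lra). apply Rpower_1; auto.
Qed.

Lemma rp_inv (X q : R) : 0 < X -> q <> 0 -> Rpower (Rpower X (/ q)) q = X.
Proof. intros. rewrite Rpower_mult. replace (/ q * q) with 1 by (field; auto). apply Rpower_1; auto. Qed.

Lemma rp_mult (x y z : R) : 0 < x -> 0 < y -> Rpower (x * y) z = Rpower x z * Rpower y z.
Proof. intros. unfold Rpower. rewrite ln_mult by auto. rewrite <- exp_plus. f_equal. ring. Qed.

Lemma rpow_lim (c y eta : R) : 0 <= c -> 0 < y -> 0 < eta ->
  exists d, 0 < d /\ forall e, 0 < e < d -> Rpower (c + e) y < rpow c y + eta.
Proof.
  intros Hc Hy He. destruct Hc as [Hc|<-].
  - pose proof (Rpower_cont c y Hc) as C. apply continuity_pt_filterlim in C.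
    destruct (C eta He) as [alp [Ha Hb]].
    exists alp. split; auto. intros e He'. 
    assert (R_dist (Rpower (c + e) y) (Rpower c y) < eta).
    { apply Hb. split. unfold D_x, no_cond. split; auto. lra.
      simpl. unfold R_dist. replace (c + e - c) with e by ring. rewrite Rabs_right; lra. }
    unfold R_dist in H. apply Rabs_def2 in H.
    unfold rpow. destruct Rle_dec. lra. lra.
  - destruct (rpower_small y eta Hy He) as [d [Hd Hd']]. exists d. split; auto.
    intros e He'. unfold rpow. destruct Rle_dec. 2: lra. rewrite Rplus_0_l. rewrite Rplus_0_l. apply Hd'. auto.
Qed.

Lemma exp_aux (G al e1 e2 e3 e4 e5 : R) : 0 < G -> 0 < al ->
  ln al + e1 + e2 = e3 - e4 - e5 -> / G * exp e1 * exp e2 = exp e3 / (exp e4 * exp e5 * (al * G)).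
Proof.
  intros HG Hal H.
  assert (exp e3 = exp (ln al + e1 + e2) * exp e4 * exp e5).
  { rewrite H. unfold Rminus. rewrite !exp_plus, !exp_Ropp. field.
    split; apply Rgt_not_eq, exp_pos. }
  rewrite H0. rewrite !exp_plus, exp_ln by auto.
  pose proof (exp_pos e4). pose proof (exp_pos e5). field. lra.
Qed.

Lemma const_identity (B0 al q Gm : R) : 0 < B0 -> 0 < al -> 1 < q -> 0 < Gm ->
  let p := q / (q - 1) in
  / Gm * Rpower (Rpower (B0 / 2) (al * p + 1) / ((al * p + 1) * Rpower al p)) (/ p)
       * Rpower (B0 / 2 / 4) (/ q)
  = Rpower B0 (al + 1) / (Rpower 2 (al + 1 + 2 / q) * Rpower (al * p + 1) (1 / p) * (al * Gm)).
Proof.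
  intros HB Hal Hq HG p.
  assert (Hp : 1 < p /\ / p + / q = 1) by (apply pq_facts; auto). destruct Hp as [Hp Hpq].
  assert (Hp1 : 0 < al * p + 1) by nra.
  assert (L1 : ln (B0 / 2) = ln B0 - ln 2) by (apply ln_div; lra).
  assert (L2 : ln (B0 / 2 / 4) = ln B0 - ln 2 - 2 * ln 2).
  { rewrite ln_div, L1 by (try apply Rdiv_lt_0_compat; lra).
    replace 4 with (2 * 2) by ring. rewrite ln_mult by lra. ring. }
  assert (L3 : ln (Rpower (B0 / 2) (al * p + 1) / ((al * p + 1) * Rpower al p)) =
               (al * p + 1) * (ln B0 - ln 2) - ln (al * p + 1) - p * ln al).
  { rewrite ln_div. rewrite ln_mult. rewrite !ln_Rpower. rewrite L1. ring.
    auto. apply exp_pos. apply exp_pos. apply Rmult_lt_0_compat; auto. apply exp_pos. }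
  assert (RD : forall x y, Rpower x y = exp (y * ln x)) by reflexivity.
  rewrite (RD _ (/ p)). rewrite L3. rewrite (RD (B0 / 2 / 4)). rewrite L2.
  rewrite !RD.
  apply exp_aux; auto.
  assert (Hq2 : / q = 1 - / p) by lra.
  unfold Rdiv. rewrite Hq2. field. lra.
Qed.

Ltac toR := match goal with |- @eq _ ?x ?y => change (@eq R x y) end.

Definition Lt (A B a b t : R) := ((b - t) * A + (t - a) * B) / (b - a).
Definition ell (A B a b e q t : R) := Rpower ((Lt A B a b t + Rabs (Lt A B a b t)) / 2 + e) (/ q).

Lemma cont_Lt A B a b t : a < b -> continuous (Lt A B a b) t.
Proof.
  intros Hab. apply (ex_derive_continuous (Lt A B a b)).
  unfold Lt. auto_derive. lra.
Qed.

Lemma cont_ell A B a b e q t : a < b -> 0 < e -> continuous (ell A B a b e q) t.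
Proof.
  intros Hab He. unfold ell.
  apply (cont_rpow (fun t => (Lt A B a b t + Rabs (Lt A B a b t)) / 2 + e)).
  2: pose proof (Rle_abs (- Lt A B a b t)); rewrite Rabs_Ropp in H; lra.
  apply (continuous_plus (fun t => (Lt A B a b t + Rabs (Lt A B a b t)) / 2) (fun _ => e)).
  apply (continuous_ext (fun t => / 2 * (Lt A B a b t + Rabs (Lt A B a b t)))).
  intros s; unfold Rdiv; apply Rmult_comm.
  apply (continuous_scal_r (/ 2) (fun t => Lt A B a b t + Rabs (Lt A B a b t))).
  apply (continuous_plus (Lt A B a b) (fun t => Rabs (Lt A B a b t))).
  apply cont_Lt; auto.
  apply (continuous_comp (Lt A B a b) Rabs). apply cont_Lt; auto. apply continuous_Rabs.
  apply continuous_const.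
Qed.

Lemma ell_pos A B a b e q t : 0 < e -> 0 < ell A B a b e q t.
Proof. intros. apply exp_pos. Qed.

Lemma int_ell (A B a b e q : R) : a < b -> 0 <= A -> 0 <= B -> 0 < e -> 1 < q ->
  RInt (fun t => Rpower (ell A B a b e q t) q) a ((a + b) / 2) = ((b - a) / 2) * ((3 * A + B) / 4 + e) /\
  RInt (fun t => Rpower (ell A B a b e q t) q) ((a + b) / 2) b = ((b - a) / 2) * ((A + 3 * B) / 4 + e).
Proof.
  intros Hab HA HB He Hq.
  assert (Ext : forall c d, a <= c <= d -> d <= b ->
     RInt (fun t => Rpower (ell A B a b e q t) q) c d = RInt (fun t => Lt A B a b t + e) c d).
  { intros c d Hc Hd. apply RInt_ext. intros t Ht. rewrite Rmin_left in Ht by lra. rewrite Rmax_right in Ht by lra.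
    unfold ell. rewrite rp_inv.
    assert (0 <= Lt A B a b t).
    { unfold Lt. apply Rdiv_le_0_compat. 2: lra. apply Rplus_le_le_0_compat; apply Rmult_le_pos; lra. }
    rewrite Rabs_right by lra. toR. field.
    pose proof (Rle_abs (- Lt A B a b t)); rewrite Rabs_Ropp in H; lra. lra. }
  set (P := fun t => (- (b - t) ^ 2 * A + (t - a) ^ 2 * B) / (2 * (b - a)) + e * t).
  assert (IP : forall c d, a <= c <= d -> is_RInt (fun t => Lt A B a b t + e) c d (P d - P c)).
  { intros c d Hc. apply (is_RInt_derive (V := R_CompleteNormedModule) P).
    intros x Hx. unfold P, Lt. auto_derive. lra. field. lra.
    intros x Hx. apply (continuous_plus (Lt A B a b) (fun _ => e)). apply cont_Lt; auto. apply continuous_const. }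
  split.
  - rewrite Ext by lra. rewrite (is_RInt_unique _ _ _ _ (IP a ((a + b) / 2) ltac:(lra))).
    unfold P. toR. field. lra.
  - rewrite Ext by lra. rewrite (is_RInt_unique _ _ _ _ (IP ((a + b) / 2) b ltac:(lra))).
    unfold P. toR. field. lra.
Qed.

Lemma bracket_left (f g : R -> R) a m al x : a < x <= m ->
  (forall t, x <= t <= m -> continuous f t /\ continuous g t) ->
  f m * Rint (fun t => Rpower (t - a) (al - 1) * g t) x m
  - Rint (fun t => Rpower (t - a) (al - 1) * (f t * g t)) x m
  = RInt (fun t => Rpower (t - a) (al - 1) * g t * (f m - f t)) x m.
Proof.
  intros Hx H.
  assert (E1 : ex_RInt (fun t => Rpower (t - a) (al - 1) * g t) x m) by (apply ex_wh; auto; intros; apply H; auto).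
  assert (E2 : ex_RInt (fun t => Rpower (t - a) (al - 1) * (f t * g t)) x m).
  { apply ex_wh; auto. intros t Ht. apply (continuous_mult f g); apply H; auto. }
  rewrite !Rint_RInt by auto.
  replace (f m * RInt (fun t => Rpower (t - a) (al - 1) * g t) x m -
           RInt (fun t => Rpower (t - a) (al - 1) * (f t * g t)) x m) with
    (f m * RInt (fun t => Rpower (t - a) (al - 1) * g t) x m +
     (-1) * RInt (fun t => Rpower (t - a) (al - 1) * (f t * g t)) x m) by ring.
  rewrite <- RInt_lin2 by auto. apply RInt_ext. intros; toR; ring.
Qed.

Lemma bracket_right (f g : R -> R) a b al y : a < b -> (a + b) / 2 < y < b ->
  (forall t, (a + b) / 2 <= t <= y -> continuous f t /\ continuous g t) ->
  f ((a + b) / 2) * Rint (fun t => Rpower (b - t) (al - 1) * g t) ((a + b) / 2) y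
  - Rint (fun t => Rpower (b - t) (al - 1) * (f t * g t)) ((a + b) / 2) y
  = RInt (fun s => Rpower (s - a) (al - 1) * g (a + b - s) * (f (a + b - (a + b) / 2) - f (a + b - s)))
      (a + b - y) ((a + b) / 2).
Proof.
  intros Hab Hy H.
  rewrite (refl_w g) by (auto; intros; apply H; auto).
  rewrite (refl_w (fun t => f t * g t)) by (auto; intros; apply (continuous_mult f g); apply H; auto).
  replace (a + b - (a + b) / 2) with ((a + b) / 2) by field.
  assert (Hc : forall s, a + b - y <= s <= (a + b) / 2 -> continuous (fun s => g (a + b - s)) s /\
     continuous (fun s => f (a + b - s) * g (a + b - s)) s).
  { intros s Hs.
    assert (C1 : continuous (fun s => a + b - s) s).
    { apply (continuous_minus (fun _ => a + b) (fun t => t)). apply continuous_const. apply continuous_id. }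
    split. apply (continuous_comp (fun s => a + b - s) g). auto. apply H; lra.
    apply (continuous_mult (fun s => f (a + b - s)) (fun s => g (a + b - s))).
    apply (continuous_comp (fun s => a + b - s) f). auto. apply H; lra.
    apply (continuous_comp (fun s => a + b - s) g). auto. apply H; lra. }
  assert (E1 : ex_RInt (fun s => Rpower (s - a) (al - 1) * g (a + b - s)) (a + b - y) ((a + b) / 2)).
  { apply (ex_wh (fun s => g (a + b - s))). lra. intros; apply Hc; auto. }
  assert (E2 : ex_RInt (fun s => Rpower (s - a) (al - 1) * (f (a + b - s) * g (a + b - s))) (a + b - y) ((a + b) / 2)).
  { apply (ex_wh (fun s => f (a + b - s) * g (a + b - s))). lra. intros; apply Hc; auto. }
  replace (f ((a + b) / 2) * RInt (fun s => Rpower (s - a) (al - 1) * g (a + b - s)) (a + b - y) ((a + b) / 2) -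
     RInt (fun s => Rpower (s - a) (al - 1) * (f (a + b - s) * g (a + b - s))) (a + b - y) ((a + b) / 2)) with
    (f ((a + b) / 2) * RInt (fun s => Rpower (s - a) (al - 1) * g (a + b - s)) (a + b - y) ((a + b) / 2) +
     (-1) * RInt (fun s => Rpower (s - a) (al - 1) * (f (a + b - s) * g (a + b - s))) (a + b - y) ((a + b) / 2)) by ring.
  rewrite <- RInt_lin2 by auto. apply RInt_ext. intros; toR; ring.
Qed.

Lemma abs2 (x y : R) : Rabs x <= y -> - y <= x <= y.
Proof. intros H. pose proof (Rle_abs x). pose proof (Rle_abs (- x)). rewrite Rabs_Ropp in *. lra. Qed.

Theorem theorem2p6 (I : R -> Prop) (f f' g : R -> R) (a b al q : R) :
  is_interval I ->
  (forall x, interior I x -> derivable_pt_lim f x (f' x)) ->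
  interior I a -> interior I b -> a < b ->
  Riemann_integrable f' a b ->
  (forall x, a <= x <= b -> limit1_in g (fun y => a <= y <= b) (g x) x) ->
  0 < al -> 1 < q ->
  let p := q / (q - 1) in
  let m := (a + b) / 2 in
  convex_on (fun t => rpow (Rabs (f' t)) q) a b ->
  Rabs (f m * (RL_minus al g m a + RL_plus al g m b)
        - (RL_minus al (fun t => f t * g t) m a
           + RL_plus al (fun t => f t * g t) m b))
  <= supnorm g a b * Rpower (b - a) (al + 1)
     / (Rpower 2 (al + 1 + 2 / q) * Rpower (al * p + 1) (1 / p) * Gamma (al + 1))
     * (rpow (3 * rpow (Rabs (f' a)) q + rpow (Rabs (f' b)) q) (1 / q)
        + rpow (rpow (Rabs (f' a)) q + 3 * rpow (Rabs (f' b)) q) (1 / q)).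
Proof.
  intros HI Hder Ha Hb Hab Hint Hg Hal Hq p m Hconv.
  assert (Hm : m = (a + b) / 2) by reflexivity.
  assert (Hin := interior_ab I a b HI Ha Hb Hab).
  assert (Df : forall t, a <= t <= b -> derivable_pt_lim f t (f' t)) by (intros; apply Hder, Hin; auto).
  assert (Cfp : forall t, a <= t <= b -> continuity_pt f t).
  { intros t Ht; apply derivable_continuous_pt; exists (f' t); apply Df; auto. }
  assert (Cf : forall t, a <= t <= b -> continuous f t) by (intros; apply continuity_pt_filterlim; auto).
  assert (Cg := g_cont_int g a b Hg).
  set (G := supnorm g a b).
  assert (HGb : forall t, a <= t <= b -> Rabs (g t) <= G) by (apply supnorm_bound; auto).
  assert (HG0 : 0 <= G) by (pose proof (HGb a ltac:(lra)); pose proof (Rabs_pos (g a)); lra).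
  destruct (f_bounded f a b ltac:(lra) Cfp) as [Mf HMf].
  destruct (gamma_facts al Hal) as [HGam HGam1].
  destruct (pq_facts q Hq) as [Hp Hpq]. fold p in Hp, Hpq.
  set (A := rpow (Rabs (f' a)) q). set (B := rpow (Rabs (f' b)) q).
  assert (HA : 0 <= A) by apply rpow_nonneg. assert (HB : 0 <= B) by apply rpow_nonneg.
  assert (Hcb := convex_bound f' a b q Hab Hconv). fold A B in Hcb.
  set (d := (b - a) / 2).
  set (C := Rpower (Rpower d (al * p + 1) / ((al * p + 1) * Rpower al p)) (/ p)).
  assert (HC : 0 <= C) by (apply Rlt_le, exp_pos).
  assert (Hma : m - a = d) by (rewrite Hm; unfold d; field).
  assert (Cfg : forall t, a < t < b -> continuous (fun t => f t * g t) t /\ Rabs (f t * g t) <= Mf * G).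
  { intros t Ht. split. apply (continuous_mult f g). apply Cf; lra. apply Cg; lra.
    rewrite Rabs_mult. apply Rmult_le_compat. apply Rabs_pos. apply Rabs_pos. apply HMf; lra. apply HGb; lra. }
  pose proof (improper_left_spec g a m al G ltac:(lra) Hal
     ltac:(intros t Ht; split; [apply Cg; lra | apply HGb; lra])) as SL1.
  pose proof (improper_left_spec (fun t => f t * g t) a m al (Mf * G) ltac:(lra) Hal
     ltac:(intros t Ht; apply Cfg; lra)) as SL2.
  pose proof (improper_right_spec g a b al G Hab Hal
     ltac:(intros t Ht; split; [apply Cg; lra | apply HGb; lra])) as SR1.
  pose proof (improper_right_spec (fun t => f t * g t) a b al (Mf * G) Hab Hal
     ltac:(intros t Ht; apply Cfg; lra)) as SR2.
  cbv beta in SL2, SR2. fold m in SR1, SR2.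
  unfold RL_minus, RL_plus. cbv beta.
  set (V1 := improper_left (fun t => Rpower (t - a) (al - 1) * g t) a m) in *.
  set (V2 := improper_right (fun t => Rpower (b - t) (al - 1) * g t) m b) in *.
  set (V3 := improper_left (fun t => Rpower (t - a) (al - 1) * (f t * g t)) a m) in *.
  set (V4 := improper_right (fun t => Rpower (b - t) (al - 1) * (f t * g t)) m b) in *.
  assert (Hd0 : 0 < d) by (unfold d; lra).
  assert (Key : forall e, 0 < e -> Rabs (f m * (V1 + V2) - (V3 + V4)) <=
      G * C * (Rpower (d * ((3 * A + B) / 4 + e)) (/ q) + Rpower (d * ((A + 3 * B) / 4 + e)) (/ q))).
  { intros e He.
    set (l := ell A B a b e q).
    assert (Cl : forall t, continuous l t) by (intros; apply cont_ell; auto).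
    assert (Pl : forall t, 0 < l t) by (intros; apply ell_pos; auto).
    assert (Hfl : forall t, a <= t <= b -> Rabs (f' t) <= l t).
    { intros t Ht. unfold l, ell. apply fprime_le_ell; auto. }
    destruct (int_ell A B a b e q Hab HA HB He Hq) as [IL IR]. fold l in IL, IR. fold m d in IL, IR.
    assert (CoreL : forall x, a < x < m ->
       Rabs (RInt (fun t => Rpower (t - a) (al - 1) * g t * (f m - f t)) x m)
       <= G * C * Rpower (d * ((3 * A + B) / 4 + e)) (/ q)).
    { intros x Hx.
      assert (H := core f f' g l a m al q G x Hx Hal Hq (fun t Ht => Df t ltac:(lra)) Cl Pl
         (fun t Ht => Hfl t ltac:(lra)) (fun t Ht => conj (Cg t ltac:(lra)) (HGb t ltac:(lra)))).
      fold p in H. rewrite IL, Hma in H. fold C in H. exact H. }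
    assert (CoreR : forall y, m < y < b ->
       Rabs (RInt (fun s => Rpower (s - a) (al - 1) * g (a + b - s) * (f m - f (a + b - s))) (a + b - y) m)
       <= G * C * Rpower (d * ((A + 3 * B) / 4 + e)) (/ q)).
    { intros y Hy.
      assert (D2 : forall t, a <= t <= m -> derivable_pt_lim (fun s => f (a + b - s)) t (- f' (a + b - t))).
      { intros t Ht. replace (- f' (a + b - t)) with (f' (a + b - t) * (-1)) by ring.
        apply (derivable_pt_lim_comp (fun s => a + b - s) f).
        replace (-1) with (0 - 1) by ring. apply derivable_pt_lim_minus.
        apply derivable_pt_lim_const. apply derivable_pt_lim_id. apply Df; lra. }
      assert (Cm : forall t, continuous (fun s => a + b - s) t).
      { intros t. apply (continuous_minus (fun _ => a + b) (fun t => t)). apply continuous_const. apply continuous_id. }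
      assert (C2 : forall t, continuous (fun s => l (a + b - s)) t).
      { intros t. apply (continuous_comp (fun s => a + b - s) l). auto. auto. }
      assert (P2 : forall t, 0 < l (a + b - t)) by auto.
      assert (B2 : forall t, a <= t <= m -> Rabs (- f' (a + b - t)) <= l (a + b - t)).
      { intros t Ht. rewrite Rabs_Ropp. apply Hfl; lra. }
      assert (G2 : forall t, a < t <= m -> continuous (fun s => g (a + b - s)) t /\ Rabs (g (a + b - t)) <= G).
      { intros t Ht. split. apply (continuous_comp (fun s => a + b - s) g). auto. apply Cg; lra. apply HGb; lra. }
      assert (H := core (fun s => f (a + b - s)) (fun s => - f' (a + b - s)) (fun s => g (a + b - s))
                   (fun s => l (a + b - s)) a m al q G (a + b - y) ltac:(lra) Hal Hq D2 C2 P2 B2 G2).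
      cbv beta in H. fold p in H. rewrite Hma in H. fold C in H.
      replace (a + b - m) with m in H by (rewrite Hm; field).
      assert (RR : RInt (fun t => Rpower (l t) q) m b = RInt (fun s => Rpower (l (a + b - s)) q) a m).
      { rewrite (refl_RInt _ a b m b Hm). replace (a + b - b) with a by ring. reflexivity.
        apply cont_all_ex. intros; apply cont_rpow; auto. }
      rewrite <- RR, IR in H. exact H. }
    apply le_eps. intros eta Heta.
    set (eta' := eta / (2 * (Rabs (f m) + 1))).
    assert (Hfm := Rabs_pos (f m)).
    assert (Heta' : eta' > 0) by (unfold eta'; apply Rdiv_lt_0_compat; lra).
    assert (Eeta : 2 * (Rabs (f m) + 1) * eta' = eta) by (unfold eta'; field; lra).
    destruct (SL1 eta' Heta') as [d1 [Hd1 H1]]. destruct (SL2 eta' Heta') as [d3 [Hd3 H3]].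
    destruct (SR1 eta' Heta') as [d2 [Hd2 H2]]. destruct (SR2 eta' Heta') as [d4 [Hd4 H4]].
    set (r1 := Rmin (Rmin d1 d3) d). set (r2 := Rmin (Rmin d2 d4) d).
    assert (Hr1 : 0 < r1 /\ r1 <= d1 /\ r1 <= d3 /\ r1 <= d).
    { unfold r1. pose proof (Rmin_l (Rmin d1 d3) d). pose proof (Rmin_r (Rmin d1 d3) d).
      pose proof (Rmin_l d1 d3). pose proof (Rmin_r d1 d3).
      split. apply Rmin_pos. apply Rmin_pos; lra. lra. lra. }
    assert (Hr2 : 0 < r2 /\ r2 <= d2 /\ r2 <= d4 /\ r2 <= d).
    { unfold r2. pose proof (Rmin_l (Rmin d2 d4) d). pose proof (Rmin_r (Rmin d2 d4) d).
      pose proof (Rmin_l d2 d4). pose proof (Rmin_r d2 d4).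
      split. apply Rmin_pos. apply Rmin_pos; lra. lra. lra. }
    set (x := a + r1 / 2). set (y := b - r2 / 2).
    assert (Hx : a < x < m) by (unfold x; lra).
    assert (Hy : m < y < b) by (unfold y; lra).
    specialize (H1 x ltac:(unfold x; lra)). specialize (H3 x ltac:(unfold x; lra)).
    specialize (H2 y ltac:(unfold y; lra)). specialize (H4 y ltac:(unfold y; lra)).
    pose proof (bracket_left f g a m al x ltac:(lra)
      (fun t Ht => conj (Cf t ltac:(lra)) (Cg t ltac:(lra)))) as BL.
    pose proof (bracket_right f g a b al y Hab ltac:(lra)
      (fun t Ht => conj (Cf t ltac:(lra)) (Cg t ltac:(lra)))) as BR.
    fold m in BR. replace (a + b - m) with m in BR by (rewrite Hm; field).
    pose proof (CoreL x Hx) as K1. pose proof (CoreR y Hy) as K2.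
    rewrite <- BL in K1. rewrite <- BR in K2.
    apply abs2 in K1. apply abs2 in K2.
    set (I1 := Rint (fun t => Rpower (t - a) (al - 1) * g t) x m) in *.
    set (I3 := Rint (fun t => Rpower (t - a) (al - 1) * (f t * g t)) x m) in *.
    set (I2 := Rint (fun t => Rpower (b - t) (al - 1) * g t) m y) in *.
    set (I4 := Rint (fun t => Rpower (b - t) (al - 1) * (f t * g t)) m y) in *.
    assert (Q1 : Rabs (f m * (I1 - V1)) <= Rabs (f m) * eta').
    { rewrite Rabs_mult. apply Rmult_le_compat_l. auto. lra. }
    assert (Q2 : Rabs (f m * (I2 - V2)) <= Rabs (f m) * eta').
    { rewrite Rabs_mult. apply Rmult_le_compat_l. auto. lra. }
    apply abs2 in Q1. apply abs2 in Q2.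
    apply Rlt_le, abs2 in H3. apply Rlt_le, abs2 in H4.
    apply Rabs_le. split; nra. }
  assert (HK0 : 0 <= G * C * Rpower (d / 4) (/ q)).
  { apply Rmult_le_pos. apply Rmult_le_pos; auto. apply Rlt_le, exp_pos. }
  assert (Fin : Rabs (f m * (V1 + V2) - (V3 + V4)) <=
     G * C * Rpower (d / 4) (/ q) * (rpow (3 * A + B) (/ q) + rpow (A + 3 * B) (/ q))).
  { set (K0 := G * C * Rpower (d / 4) (/ q)) in *.
    apply le_eps. intros eta Heta.
    set (eta2 := eta / (2 * (K0 + 1))).
    assert (He2 : 0 < eta2) by (unfold eta2; apply Rdiv_lt_0_compat; lra).
    assert (Ee2 : 2 * (K0 + 1) * eta2 = eta) by (unfold eta2; field; lra).
    assert (Hiq : 0 < / q) by (apply Rinv_0_lt_compat; lra).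
    destruct (rpow_lim (3 * A + B) (/ q) eta2 ltac:(lra) Hiq He2) as [da [Hda Ha']].
    destruct (rpow_lim (A + 3 * B) (/ q) eta2 ltac:(lra) Hiq He2) as [db [Hdb Hb']].
    pose proof (Rmin_l da db). pose proof (Rmin_r da db).
    assert (Hmn : 0 < Rmin da db) by (apply Rmin_pos; auto).
    set (e := Rmin da db / 8).
    assert (He : 0 < e) by (unfold e; lra).
    specialize (Key e He).
    specialize (Ha' (4 * e) ltac:(unfold e; lra)). specialize (Hb' (4 * e) ltac:(unfold e; lra)).
    replace (d * ((3 * A + B) / 4 + e)) with (d / 4 * (3 * A + B + 4 * e)) in Key by field.
    replace (d * ((A + 3 * B) / 4 + e)) with (d / 4 * (A + 3 * B + 4 * e)) in Key by field.
    rewrite !rp_mult in Key by lra.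
    replace (G * C * (Rpower (d / 4) (/ q) * Rpower (3 * A + B + 4 * e) (/ q) +
                      Rpower (d / 4) (/ q) * Rpower (A + 3 * B + 4 * e) (/ q)))
      with (K0 * (Rpower (3 * A + B + 4 * e) (/ q) + Rpower (A + 3 * B + 4 * e) (/ q))) in Key
      by (unfold K0; ring).
    assert (K0 * (Rpower (3 * A + B + 4 * e) (/ q) + Rpower (A + 3 * B + 4 * e) (/ q)) <=
            K0 * (rpow (3 * A + B) (/ q) + rpow (A + 3 * B) (/ q) + 2 * eta2)).
    { apply Rmult_le_compat_l. auto. lra. }
    assert (K0 * (2 * eta2) <= eta) by nra.
    nra. }
  rewrite HGam1.
  replace (1 / q) with (/ q) by (field; lra).
  pose proof (const_identity (b - a) al q (Gamma al) ltac:(lra) Hal Hq HGam) as CI. fold p in CI.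
  cbv zeta in CI. fold d in CI. fold C in CI.
  replace (G * Rpower (b - a) (al + 1) / (Rpower 2 (al + 1 + 2 / q) * Rpower (al * p + 1) (1 / p) * (al * Gamma al)))
    with (G * (Rpower (b - a) (al + 1) / (Rpower 2 (al + 1 + 2 / q) * Rpower (al * p + 1) (1 / p) * (al * Gamma al))))
    by (unfold Rdiv; ring).
  rewrite <- CI.
  replace (f m * (/ Gamma al * V1 + / Gamma al * V2) - (/ Gamma al * V3 + / Gamma al * V4))
    with (/ Gamma al * (f m * (V1 + V2) - (V3 + V4))) by ring.
  assert (HiG : 0 < / Gamma al) by (apply Rinv_0_lt_compat; auto).
  rewrite Rabs_mult, (Rabs_right (/ Gamma al)) by lra.
  replace (G * (/ Gamma al * C * Rpower (d / 4) (/ q)) * (rpow (3 * A + B) (/ q) + rpow (A + 3 * B) (/ q)))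
    with (/ Gamma al * (G * C * Rpower (d / 4) (/ q) * (rpow (3 * A + B) (/ q) + rpow (A + 3 * B) (/ q)))) by ring.
  apply Rmult_le_compat_l; lra.
Qed.
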